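(* Let $q>0$, $q\neq1$, let $x(s)=c_1q^{s}+c_2q^{-s}+c_3$ with $q^\mu=c_1/c_2$, let $\tilde\sigma,\tilde\tau$ be polynomials of degrees at most $2$ and $1$ with $\tilde\tau(x)=\tilde\tau' x+\tilde\tau(0)$, $\tilde\sigma(x)=\tfrac{\tilde\sigma''}{2}x^2+\tilde\sigma'(0)x+\tilde\sigma(0)$, and set $\sigma(s)=\tilde\sigma(x(s))-\tfrac12\tilde\tau(x(s))\Delta x(s-\tfrac12)$, $\tau(s)=\tilde\tau(x(s))$. Let $P_n(s;q)$ be polynomial (in $x(s)$) solutions of degree $n$ of $$\sigma(s)\frac{\Delta}{\Delta x(s-\frac12)}\left[\frac{\nabla y(s)}{\nabla x(s)}\right]+\tau(s)\frac{\Delta y(s)}{\Delta x(s)}+\lambda y(s)=0$$ with $\lambda=\lambda_n$, where $\lambda_n=C_1q^n+C_2q^{-n}+C_3$ with $C_1=\frac{1}{2(1-q)}\big(\tilde\tau'+\tilde\sigma''/k_q\big)$, $C_2=\frac{1}{2(1-q^{-1})}\big(\tilde\tau'-\tilde\sigma''/k_q\big)$, $C_3=-\frac{\tilde\sigma''(1+q)}{2k_q(1-q)}-\frac{\tilde\tau'}{2}$. Let $\Phi_n(s;q)=d_n^{-1}A(s)\sqrt{\rho(s)}P_n(s;q)$ (with $\rho$, $d_n$, $A$ as in the context), so that $\mathfrak H(s;q)\Phi_n(s;q)=\lambda_n\Phi_n(s;q)$, where $\mathfrak H(s;q)=\frac{1}{\nabla x_1(s)}A(s)H(s;q)\frac1{A(s)}$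 and $$H(s;q)=-\frac{\sqrt{\sigma(-s-\mu+1)\sigma(s)}}{\nabla x(s)}e^{-\partial_s}-\frac{\sqrt{\sigma(-s-\mu)\sigma(s+1)}}{\Delta x(s)}e^{\partial_s}+\left(\frac{\sigma(-s-\mu)}{\Delta x(s)}+\frac{\sigma(s)}{\nabla x(s)}\right)I.$$ Suppose that there exist operators $a(s;q)$, $b(s;q)$ and constants $\varsigma$ and $\Lambda\neq0$ such that $\mathfrak H(s;q)=b(s;q)a(s;q)$ and $a(s;q)b(s;q)-\varsigma\, b(s;q)a(s;q)=\Lambda I$. Then the eigenvalues $\lambda_n$ are $q$-linear or $q^{-1}$-linear functions of $n$, i.e. $\lambda_n=C_1q^n+C_3$ for all $n$ or $\lambda_n=C_2q^{-n}+C_3$ for all $n$.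
   Context: Notation: $\Delta f(s)=f(s+1)-f(s)$, $\nabla f(s)=f(s)-f(s-1)$; $x_1(s):=x(s+\tfrac12)$; $k_q=q^{1/2}-q^{-1/2}$; $e^{\beta\partial_s}f(s)=f(s+\beta)$; functions in operator products act by multiplication; $I$ is the identity. For a $q$-linear lattice ($c_1=0$ or $c_2=0$), $\sigma(-s-\mu)$ is read as $\sigma(s)+\tau(s)\Delta x(s-\tfrac12)$ (and $\sigma(-s-\mu+1)$ accordingly with $s$ replaced by $s-1$). $\rho(s)$ is a solution of the Pearson-type equation $\frac{\Delta}{\Delta x(s-1/2)}[\sigma(s)\rho(s)]=\tau(s)\rho(s)$, $d_n$ is the norm of $P_n$ with respect to the associated orthogonality, and $A(s)$ is an arbitrary continuous function non-vanishing on the orthogonality interval. *)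

(* Defs.v *)
From HB Require Import structures.
From mathcomp Require Import all_boot all_order all_algebra.
From mathcomp Require Import all_classical all_reals all_analysis.
Set Implicit Arguments. Unset Strict Implicit. Unset Printing Implicit Defensive.
Import Order.TTheory GRing.Theory Num.Theory numFieldNormedType.Exports.
Local Open Scope ring_scope.

Section Defs.
Context {R : realType}.

Definition Delta (f : R -> R) (s : R) : R := f (s + 1) - f s.
Definition Nabla (f : R -> R) (s : R) : R := f s - f (s - 1).

Definition xl (q c1 c2 c3 : R) (s : R) : R := c1 * q `^ s + c2 * q `^ (- s) + c3.

Definition x1l (q c1 c2 c3 : R) (s : R) : R := xl q c1 c2 c3 (s + 2^-1).

Definition kq (q : R) : R := Num.sqrt q - (Num.sqrt q)^-1.

Definition sigt (s2 s1 s0 : R) (x : R) : R := s2 / 2 * x ^+ 2 + s1 * x + s0.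
Definition taut (t1 t0 : R) (x : R) : R := t1 * x + t0.

Section Lattice.
Variables (q c1 c2 c3 mu s2 s1 s0 t1 t0 : R).
Let x := xl q c1 c2 c3.

Definition sigmaL (s : R) : R :=
  sigt s2 s1 s0 (x s) - 2^-1 * taut t1 t0 (x s) * Delta x (s - 2^-1).
Definition tauL (s : R) : R := taut t1 t0 (x s).

(* sigma(-s-mu); on a q-linear lattice (c1 = 0 or c2 = 0) read as
   sigma(s) + tau(s) Delta x(s - 1/2), as prescribed by the context. *)
Definition sigmaRefl (s : R) : R :=
  if (c1 != 0) && (c2 != 0) then sigmaL (- s - mu)
  else sigmaL s + tauL s * Delta x (s - 2^-1).

Definition Hop (f : R -> R) (s : R) : R :=
  - (Num.sqrt (sigmaRefl (s - 1) * sigmaL s) / Nabla x s) * f (s - 1)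
  - (Num.sqrt (sigmaRefl s * sigmaL (s + 1)) / Delta x s) * f (s + 1)
  + (sigmaRefl s / Delta x s + sigmaL s / Nabla x s) * f s.

Definition Hfrak (A : R -> R) (f : R -> R) (s : R) : R :=
  (Nabla (x1l q c1 c2 c3) s)^-1 * (A s * Hop (fun t => f t / A t) s).

Definition DEop (y : R -> R) (lam : R) (s : R) : R :=
  sigmaL s * (Delta (fun t => Nabla y t / Nabla x t) s / Delta x (s - 2^-1))
  + tauL s * (Delta y s / Delta x s) + lam * y s.

Definition C1 : R := (2 * (1 - q))^-1 * (t1 + s2 / kq q).
Definition C2 : R := (2 * (1 - q^-1))^-1 * (t1 - s2 / kq q).
Definition C3 : R := - (s2 * (1 + q)) / (2 * kq q * (1 - q)) - t1 / 2.
Definition lambda (n : nat) : R := C1 * q ^+ n + C2 * q ^- n + C3.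

End Lattice.

Definition PhiF (d : nat -> R) (A rho : R -> R) (P : nat -> R -> R) (n : nat) (s : R) : R :=
  (d n)^-1 * A s * Num.sqrt (rho s) * P n s.

Definition eqOn (D : set R) (f g : R -> R) : Prop := forall s, D s -> f s = g s.

Definition inSpan (D : set R) (Phi : nat -> R -> R) (f : R -> R) : Prop :=
  exists (N : nat) (c : nat -> R), eqOn D f (fun s => \sum_(i < N) c i * Phi i s).

Definition linOnSpan (D : set R) (Phi : nat -> R -> R) (T : (R -> R) -> (R -> R)) : Prop :=
  [/\ forall f g, inSpan D Phi f -> eqOn D f g -> eqOn D (T f) (T g),
      forall f, inSpan D Phi f -> inSpan D Phi (T f) &
      forall (k : R) f g, inSpan D Phi f -> inSpan D Phi g ->
        eqOn D (T (fun s => k * f s + g s)) (fun s => k * T f s + T g s)].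

End Defs.

(* Main.v *)
Require Import Defs.
From HB Require Import structures.
From mathcomp Require Import all_boot all_order all_algebra.
From mathcomp Require Import all_classical all_reals all_analysis.
Import Order.TTheory GRing.Theory Num.Theory numFieldNormedType.Exports.
From mathcomp Require Import ring lra.
Local Open Scope ring_scope.

Section Key.
Variable R : realType.

Lemma bern (Q : R) (N : nat) : 1 < Q -> 1 + N%:R * (Q - 1) <= Q ^+ N.
Proof.
move=> hQ; elim: N => [|N IH]; first by rewrite mul0r addr0 expr0.
rewrite exprS -natr1.
have h0 : 0 <= N%:R :> R by exact: ler0n.
have h1 : 1 <= Q ^+ N by exact: exprn_ege1 (ltW hQ).
nra.
Qed.

Lemma big_pow (Q L : R) : 1 < Q -> exists N : nat, L < Q ^+ N.
Proof.
move=> hQ; exists (Num.Def.truncn (L / (Q - 1))).+1.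
have := truncnS_gt (L / (Q - 1)).
have hb := bern Q (Num.Def.truncn (L / (Q - 1))).+1 hQ.
set M := (_.+1)%:R in hb * => hM.
have hq : 0 < Q - 1 by lra.
have : L < M * (Q - 1) by rewrite -ltr_pdivrMr.
have : 0 <= M by exact: ler0n.
nra.
Qed.

Lemma quad3 (A B K t Q : R) : 0 < t -> 1 < Q ->
  A * t + B / t = K -> A * (Q * t) + B / (Q * t) = K ->
  A * (Q ^+ 2 * t) + B / (Q ^+ 2 * t) = K -> [/\ A = 0, B = 0 & K = 0].
Proof.
move=> ht hQ e0 e1 e2.
have tn : t != 0 by rewrite gt_eqF.
have Qn : Q != 0 by rewrite gt_eqF // (lt_trans ltr01).
have h0 : A * t ^+ 2 + B = K * t by rewrite -e0; field.
have h1 : A * (Q * t) ^+ 2 + B = K * (Q * t).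
  by rewrite -e1; field; rewrite tn Qn.
have h2 : A * (Q ^+ 2 * t) ^+ 2 + B = K * (Q ^+ 2 * t).
  by rewrite -e2; field; rewrite tn Qn.
have g1 : (A * t * (1 + Q) - K) * (t * (1 - Q)) = 0.
  have -> : (A * t * (1 + Q) - K) * (t * (1 - Q)) =
     (A * t ^+ 2 + B - K * t) - (A * (Q * t) ^+ 2 + B - K * (Q * t)) by ring.
  by rewrite h0 h1; ring.
have g2 : (A * t * (1 + Q ^+ 2) - K) * (t * (1 - Q ^+ 2)) = 0.
  have -> : (A * t * (1 + Q ^+ 2) - K) * (t * (1 - Q ^+ 2)) =
     (A * t ^+ 2 + B - K * t) - (A * (Q ^+ 2 * t) ^+ 2 + B - K * (Q ^+ 2 * t)) by ring.
  by rewrite h0 h2; ring.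
have n1 : t * (1 - Q) != 0 by rewrite mulf_neq0 // subr_eq0 lt_eqF.
have n2 : t * (1 - Q ^+ 2) != 0.
  rewrite mulf_neq0 // subr_eq0 eq_sym; apply/negP => /eqP h.
  have : 1 < Q ^+ 2 by rewrite expr2; nra.
  by rewrite h ltxx.
move: g1 g2 => /eqP; rewrite mulf_eq0 (negbTE n1) orbF => /eqP g1.
move/eqP; rewrite mulf_eq0 (negbTE n2) orbF => /eqP g2.
have hA : A * (t * (Q ^+ 2 - Q)) = 0.
  have -> : A * (t * (Q ^+ 2 - Q)) = (A * t * (1 + Q ^+ 2) - K) - (A * t * (1 + Q) - K) by ring.
  by rewrite g1 g2 subr0.
have nq : t * (Q ^+ 2 - Q) != 0.
  have -> : Q ^+ 2 - Q = Q * (Q - 1) by ring.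
  by rewrite !mulf_neq0 // subr_eq0 gt_eqF.
have A0 : A = 0 by apply/eqP; move/eqP: hA; rewrite mulf_eq0 (negbTE nq) orbF.
have K0 : K = 0 by move: g1; rewrite A0 !mul0r sub0r => /eqP; rewrite oppr_eq0 => /eqP.
split => //; by move: h0; rewrite A0 K0 mul0r mul0r add0r.
Qed.

Lemma nb (x y : R) : 1 <= y -> `|x / y| <= `|x|.
Proof.
move=> hy; have y0 : 0 < y by exact: lt_le_trans ltr01 hy.
rewrite normrM normfV (gtr0_norm y0) ler_piMr // invf_le1 //.
Qed.

Lemma powQ_lt (Q : R) (a b : nat) : 1 < Q -> (a < b)%N -> Q * Q ^+ a <= Q ^+ b.
Proof.
move=> hQ hab; have [d ->] : exists d, b = (a + d).+1.
  by exists (b - a.+1)%N; rewrite -addSn subnKC.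
rewrite exprS exprD mulrA ler_peMr //.
  by rewrite mulr_ge0 // ?exprn_ge0 // ltW // (lt_trans ltr01).
by rewrite exprn_ege1 // ltW.
Qed.

Lemma pairL (Q c U ui uj vi vj X Y vs : R) : 1 < Q -> 0 <= c -> c < U ->
  2 * Q * c < (Q - 1) * U -> U <= ui -> U <= uj -> `|vi - ui| <= c ->
  `|vj - uj| <= c -> 0 < X -> Q * X <= Y -> vs * X = vi * uj ->
  vs * Y = vj * ui -> False.
Proof.
move=> hQ c0 cU hU Ui Uj hi hj X0 QXY eX eY.
move: hi hj; rewrite !ler_norml => /andP[vi1 vi2] /andP[vj1 vj2].
have vip : 0 < vi by lra.
have vsX : 0 < vs * X by rewrite eX mulr_gt0 //; lra.
have vs0 : 0 < vs by move: vsX; rewrite pmulr_lgt0.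
have h1 : Q * (vi * uj) <= vj * ui.
  by rewrite -eX -eY mulrCA ler_pM2l.
have ui0 : 0 <= ui by lra.
have uj0 : 0 <= uj by lra.
have p1 : 0 <= (vi - ui + c) * (Q * uj) by rewrite mulr_ge0 //; nra.
have p2 : 0 <= (uj + c - vj) * ui by rewrite mulr_ge0 //; nra.
have h2 : (Q - 1) * ui * uj <= c * ui + Q * c * uj by nra.
have h3 : 0 <= ((Q - 1) * ui) * (uj - U) by rewrite mulr_ge0 // ?mulr_ge0; lra.
have h4 : 0 <= ((Q - 1) * uj) * (ui - U) by rewrite mulr_ge0 // ?mulr_ge0; lra.
have h5 : 0 < ((Q - 1) * U - 2 * Q * c) * ui by rewrite mulr_gt0 //; lra.
have h6 : 0 < ((Q - 1) * U - 2 * Q * c) * uj by rewrite mulr_gt0 //; lra.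
have h7 : 0 <= ((Q - 1) * c) * ui by rewrite mulr_ge0 // mulr_ge0 //; lra.
nra.
Qed.

Definition fk (Q al be ga : R) (k : nat) : R := al * Q ^+ k + be * (Q ^+ k)^-1 + ga.

Lemma keyL (Q al be ga vs La : R) : 1 < Q -> al != 0 -> be != 0 -> La != 0 ->
  (forall n, fk Q al be ga n = 0 \/ exists m, fk Q al be ga n - La = vs * fk Q al be ga m) ->
  False.
Proof.
move=> hQ al0 be0 La0 H.
set K := vs * ga - ga + La.
have [c ceq] : exists c, c = (`|be| + `|vs| * `|be| + `|K|) / `|al| by eexists.
have alp : 0 < `|al| by rewrite normr_gt0.
have c0 : 0 <= c by rewrite ceq divr_ge0 // !addr_ge0 // mulr_ge0.
have Q1 : 0 < Q - 1 by lra.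
set L := (`|be| + `|ga|) / `|al| + c + 2 * Q * c / (Q - 1) + 1.
have [N hN] := big_pow Q L hQ.
set U := Q ^+ N in hN.
rewrite /L in hN.
have hpos : 0 <= 2 * Q * c / (Q - 1).
  by apply: divr_ge0; [apply: mulr_ge0 => //; apply: mulr_ge0 => //; lra | lra].
have L1 : (`|be| + `|ga|) / `|al| < U.
  lra.
have L2 : c < U.
  have : 0 <= (`|be| + `|ga|) / `|al| by rewrite divr_ge0 // addr_ge0.
  lra.
have L3 : 2 * Q * c < (Q - 1) * U.
  have : 2 * Q * c / (Q - 1) < U.
    have : 0 <= (`|be| + `|ga|) / `|al| by rewrite divr_ge0 // addr_ge0.
    lra.
  by move=> h; rewrite [(Q - 1) * U]mulrC -ltr_pdivrMr.
have U1 : 1 <= U by rewrite exprn_ege1 // ltW.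
have U0 : 0 < U by lra.
have fnz : forall n, U <= Q ^+ n -> fk Q al be ga n != 0.
  move=> n Un; apply/eqP => hf.
  have t1 : 1 <= Q ^+ n by lra.
  have e : al * Q ^+ n = - (be / Q ^+ n + ga).
    apply/eqP; rewrite -subr_eq0.
    have -> : al * Q ^+ n - - (be / Q ^+ n + ga) = fk Q al be ga n by rewrite /fk; ring.
    by rewrite hf.
  have : `|al| * Q ^+ n <= `|be| + `|ga|.
    have -> : `|al| * Q ^+ n = `|al * Q ^+ n| by rewrite normrM (ger0_norm (le_trans ler01 t1)).
    rewrite e normrN; apply: le_trans (ler_normD _ _) _.
    by rewrite lerD2r nb.
  move: L1; rewrite ltr_pdivrMr // => L1.
  nra.
have bnd : forall n m, U <= Q ^+ n -> fk Q al be ga n - La = vs * fk Q al be ga m ->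
    `|vs * Q ^+ m - Q ^+ n| <= c.
  move=> n m Un e.
  have t1 : 1 <= Q ^+ n by lra.
  have s1 : 1 <= Q ^+ m by rewrite exprn_ege1 // ltW.
  have tn : Q ^+ n != 0 by rewrite gt_eqF // (lt_le_trans ltr01).
  have sn : Q ^+ m != 0 by rewrite gt_eqF // (lt_le_trans ltr01).
  have e2 : al * (vs * Q ^+ m - Q ^+ n) = be / Q ^+ n - vs * be / Q ^+ m - K.
    move: e; rewrite /fk /K => e.
    apply/eqP; rewrite -subr_eq0; apply/eqP.
    have -> : al * (vs * Q ^+ m - Q ^+ n) - (be / Q ^+ n - vs * be / Q ^+ m - K) =
      vs * (al * Q ^+ m + be * (Q ^+ m)^-1 + ga) - (al * Q ^+ n + be * (Q ^+ n)^-1 + ga - La)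
      by rewrite /K; ring.
    by rewrite e subrr.
  rewrite ceq ler_pdivlMr // mulrC -normrM e2.
  apply: le_trans (ler_normD _ _) _; rewrite normrN lerD2r.
  apply: le_trans (ler_normD _ _) _; rewrite normrN lerD //; first exact: nb.
  by rewrite -mulrA normrM ler_wpM2l // nb.
have ex : forall n, U <= Q ^+ n -> exists m, fk Q al be ga n - La = vs * fk Q al be ga m.
  move=> n Un; case: (H n) => // h; by move: (fnz n Un); rewrite h eqxx.
have UN0 : U <= Q ^+ N by [].
have E1 : Q ^+ N.+1 = Q * U by rewrite exprS.
have E2 : Q ^+ N.+2 = Q ^+ 2 * U by rewrite exprS E1 mulrA -expr2.
have UN1 : U <= Q ^+ N.+1 by rewrite E1 ler_peMl //; lra.
have UN2 : U <= Q ^+ N.+2.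
  rewrite E2 ler_peMl //; first by lra.
  by rewrite exprn_ege1 // ltW.
case: (eqVneq vs 0) => [vs0|vsn].
  have fkeq : forall n, U <= Q ^+ n -> al * Q ^+ n + be / Q ^+ n = La - ga.
    move=> n Un; have [m] := ex n Un; rewrite vs0 mul0r => /eqP.
    rewrite subr_eq0 /fk => /eqP <-; ring.
  have := fkeq _ UN0; have := fkeq _ UN1; have := fkeq _ UN2.
  rewrite E1 E2 -/U => h2 h1 h0.
  by have [A0 _ _] := quad3 _ _ _ _ _ U0 hQ h0 h1 h2; move/eqP: al0.
have [m0 f0] := ex _ UN0.
have [m1 f1] := ex _ UN1.
have [m2 f2] := ex _ UN2.
have b0 := bnd _ _ UN0 f0.
have b1 := bnd _ _ UN1 f1.
have b2 := bnd _ _ UN2 f2.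
have pr : forall ni nj mi mj, U <= Q ^+ ni -> U <= Q ^+ nj ->
    `|vs * Q ^+ mi - Q ^+ ni| <= c -> `|vs * Q ^+ mj - Q ^+ nj| <= c ->
    (mi + nj = mj + ni)%N.
  move=> ni nj mi mj Ui Uj bi bj.
  have Xp : forall k, 0 < Q ^+ k by move=> k; rewrite exprn_gt0 // (lt_trans ltr01).
  case: (ltngtP (mi + nj) (mj + ni)) => h //; exfalso.
    apply: (pairL _ _ _ _ _ _ _ _ _ vs hQ c0 L2 L3 Ui Uj bi bj (Xp _) (powQ_lt _ _ _ hQ h)).
      by rewrite exprD; ring.
    by rewrite exprD; ring.
  apply: (pairL _ _ _ _ _ _ _ _ _ vs hQ c0 L2 L3 Uj Ui bj bi (Xp _) (powQ_lt _ _ _ hQ h)).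
    by rewrite exprD; ring.
  by rewrite exprD; ring.
set r := vs * Q ^+ m0 / U.
have Un : U != 0 by rewrite gt_eqF.
have rE : forall ni mi, U <= Q ^+ ni -> `|vs * Q ^+ mi - Q ^+ ni| <= c ->
    vs * Q ^+ mi = r * Q ^+ ni.
  move=> ni mi Ui bi; have := pr _ _ _ _ UN0 Ui b0 bi.
  move=> hE; rewrite /r.
  have : Q ^+ (m0 + ni) = Q ^+ (mi + N) by rewrite hE.
  rewrite !exprD -/U => hE2.
  apply: (mulIf Un).
  have -> : vs * Q ^+ m0 / U * Q ^+ ni * U = vs * (Q ^+ m0 * Q ^+ ni) by field.
  rewrite hE2; ring.
have rn : r != 0.
  by rewrite /r mulf_neq0 // ?invr_eq0 // mulf_neq0 // gt_eqF // exprn_gt0 // (lt_trans ltr01).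
have tr : forall t s, t != 0 -> vs * s = r * t ->
    (al * t + be / t + ga) - La = vs * (al * s + be / s + ga) ->
    al * (1 - r) * t + be * (1 - vs ^+ 2 / r) / t = K.
  move=> t s tn hs e.
  have sE : s = r * t / vs by rewrite -hs; field.
  rewrite sE in e.
  apply/eqP; rewrite -subr_eq0; apply/eqP.
  have -> : al * (1 - r) * t + be * (1 - vs ^+ 2 / r) / t - K =
    ((al * t + be / t + ga) - La) - vs * (al * (r * t / vs) + be / (r * t / vs) + ga).
    by rewrite /K; field; rewrite rn tn vsn.
  by rewrite e subrr.
have g0 := tr _ _ Un (rE _ _ UN0 b0) f0.
have g1 := tr _ _ (lt0r_neq0 (lt_le_trans U0 UN1)) (rE _ _ UN1 b1) f1.
have g2 := tr _ _ (lt0r_neq0 (lt_le_trans U0 UN2)) (rE _ _ UN2 b2) f2.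
rewrite E1 in g1; rewrite E2 in g2.
have [A0 B0 K0] := quad3 _ _ _ _ _ U0 hQ g0 g1 g2.
have r1 : r = 1.
  by apply/eqP; move/eqP: A0; rewrite mulf_eq0 (negbTE al0) /= subr_eq0 eq_sym.
have v2 : vs ^+ 2 = 1.
  move/eqP: B0; rewrite mulf_eq0 (negbTE be0) /= subr_eq0 r1 divr1 => /eqP.
  by [].
have vsp : 0 < vs.
  have : 0 < vs * Q ^+ m0 by rewrite (rE _ _ UN0 b0) r1 mul1r.
  by rewrite pmulr_lgt0 // exprn_gt0 // (lt_trans ltr01).
have v1 : vs = 1.
  move: v2; rewrite expr2 => v2; nra.
by move: K0; rewrite /K v1 mul1r subrr add0r => /eqP; rewrite (negbTE La0).
Qed.
End Key.

Section Indep.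
Variable R : realType.

Lemma indep (N : nat) (x e : nat -> R) : (forall i, e i != 0) ->
  (forall k, \sum_(i < N) x i * e i ^+ k.+1 = 0) -> \sum_(i < N) x i = 0.
Proof.
elim: N x => [|N IH] x he H; first by rewrite big_ord0.
set el := e N.
have h1 : \sum_(i < N) (x i * (e i - el)) = 0.
  apply: (IH (fun i => x i * (e i - el))) => // k.
  have := H k.+1; have := H k.
  rewrite !big_ord_recr /= => hk hk1.
  have : \sum_(i < N) x i * e i ^+ k.+2 - el * \sum_(i < N) x i * e i ^+ k.+1 = 0.
    have -> : \sum_(i < N) x i * e i ^+ k.+2 - el * \sum_(i < N) x i * e i ^+ k.+1 =
      (\sum_(i < N) x i * e i ^+ k.+2 + x N * e N ^+ k.+2)
      - el * (\sum_(i < N) x i * e i ^+ k.+1 + x N * e N ^+ k.+1) by rewrite /el !exprS; ring.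
    by rewrite hk hk1; ring.
  rewrite mulr_sumr -sumrB => hh; apply: eq_trans hh.
  by apply: eq_bigr => i _; rewrite !exprS; ring.
have h0 := H 0%N.
rewrite big_ord_recr /= in h0.
have h2 : \sum_(i < N) x i * e i = el * \sum_(i < N) x i.
  apply/eqP; rewrite -subr_eq0 mulr_sumr -sumrB; apply/eqP; apply: eq_trans h1.
  by apply: eq_bigr => i _; ring.
rewrite !expr1 h2 -/el in h0.
rewrite big_ord_recr /=.
have : el * (\sum_(i < N) x i + x N) = 0 by apply: eq_trans _ h0; ring.
by move/eqP; rewrite mulf_eq0 (negbTE (he N)) /= => /eqP.
Qed.
End Indep.

Section Ops.
Variable R : realType.
Variables (D : set R) (Phi : nat -> R -> R).

Lemma span_sum N (c : nat -> R) : inSpan D Phi (fun s => \sum_(i < N) c i * Phi i s).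
Proof. by exists N, c. Qed.

Lemma span_Phi n : inSpan D Phi (Phi n).
Proof.
exists n.+1, (fun i => (i == n)%:R) => s _.
rewrite big_ord_recr /= eqxx mul1r big1 ?add0r // => i _.
by rewrite (ltn_eqF (ltn_ord i)) mul0r.
Qed.

Lemma span0 : inSpan D Phi (fun _ => 0).
Proof. by exists 0%N, (fun _ => 0) => s _; rewrite big_ord0. Qed.

Section Lin.
Variable T : (R -> R) -> (R -> R).
Hypothesis hT : linOnSpan D Phi T.

Lemma Tresp {f g} : inSpan D Phi f -> eqOn D f g -> eqOn D (T f) (T g).
Proof. by case: hT => h _ _; apply: h. Qed.

Lemma Tspan {f} : inSpan D Phi f -> inSpan D Phi (T f).
Proof. by case: hT => _ h _; apply: h. Qed.

Lemma Tlin k {f g} : inSpan D Phi f -> inSpan D Phi g ->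
  eqOn D (T (fun s => k * f s + g s)) (fun s => k * T f s + T g s).
Proof. by case: hT => _ _ h; apply: h. Qed.

Lemma T0 : eqOn D (T (fun _ => 0)) (fun _ => 0).
Proof.
move=> s Ds.
have := Tlin 1 span0 span0 s Ds.
have -> : (fun _ : R => 1 * 0 + 0) = (fun _ => 0 : R) by apply: funext => t; rewrite mul1r addr0.
rewrite mul1r => h; lra.
Qed.

Lemma Tzero {f} : inSpan D Phi f -> eqOn D f (fun _ => 0) -> eqOn D (T f) (fun _ => 0).
Proof. by move=> hf e s Ds; rewrite (Tresp hf e s Ds) T0. Qed.

Lemma Tscale k {f} : inSpan D Phi f -> eqOn D (T (fun s => k * f s)) (fun s => k * T f s).
Proof.
move=> hf s Ds.
have := Tlin k hf span0 s Ds.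
have -> : (fun s => k * f s + 0) = (fun s => k * f s) by apply: funext => t; rewrite addr0.
by move=> ->; rewrite T0 // addr0.
Qed.
End Lin.
Arguments Tresp {T} hT {f g}.
Arguments Tspan {T} hT {f}.
Arguments Tlin {T} hT k {f g}.
Arguments T0 {T} hT.
Arguments Tzero {T} hT {f}.
Arguments Tscale {T} hT k {f}.

Variables (a b : (R -> R) -> (R -> R)) (lam : nat -> R) (vs La : R).
Hypotheses (la : linOnSpan D Phi a) (lb : linOnSpan D Phi b).
Hypothesis Heig : forall n, eqOn D (b (a (Phi n))) (fun s => lam n * Phi n s).
Hypothesis Hcom : forall f, inSpan D Phi f ->
  eqOn D (fun s => a (b f) s - vs * b (a f) s) (fun s => La * f s).
Hypothesis Hnz : forall n, exists s, D s /\ Phi n s != 0.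

Lemma TTresp {f g} : inSpan D Phi f -> eqOn D f g -> eqOn D (b (a f)) (b (a g)).
Proof.
move=> hf e; exact: (Tresp lb (Tspan la hf) (Tresp la hf e)).
Qed.

Lemma TTzero {f} : inSpan D Phi f -> eqOn D f (fun _ => 0) -> eqOn D (b (a f)) (fun _ => 0).
Proof.
move=> hf e s Ds; rewrite (TTresp hf e s Ds).
rewrite (Tresp lb (Tspan la span0) (T0 la) s Ds); exact: (T0 lb).
Qed.

Lemma LT N (c : nat -> R) : eqOn D (b (a (fun s => \sum_(i < N) c i * Phi i s)))
  (fun s => \sum_(i < N) c i * lam i * Phi i s).
Proof.
elim: N => [|N IH] s Ds.
  have -> : (fun s => \sum_(i < 0) c i * Phi i s) = (fun _ => 0 : R).
    by apply: funext => t; rewrite big_ord0.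
  by rewrite big_ord0; apply: TTzero => //; exact: span0.
have hs := span_sum N c.
have eG : eqOn D (fun s => \sum_(i < N.+1) c i * Phi i s)
    (fun s => c N * Phi N s + \sum_(i < N) c i * Phi i s).
  by move=> t _; rewrite big_ord_recr /= addrC.
have e1 : eqOn D (a (fun s => \sum_(i < N.+1) c i * Phi i s))
    (fun t => c N * a (Phi N) t + a (fun s => \sum_(i < N) c i * Phi i s) t).
  move=> t Dt; rewrite (Tresp la (span_sum _ _) eG t Dt).
  exact: (Tlin la (c N) (span_Phi N) hs t Dt).
rewrite (Tresp lb (Tspan la (span_sum _ _)) e1 s Ds).
rewrite (Tlin lb (c N) (Tspan la (span_Phi N)) (Tspan la hs) s Ds).
rewrite Heig // IH // big_ord_recr /=; ring.
Qed.

Lemma Pprop n : lam n = 0 \/ exists m, lam n - La = vs * lam m.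
Proof.
have hv : inSpan D Phi (a (Phi n)) := Tspan la (span_Phi n).
have [N [c hvw]] := hv.
have e1 : eqOn D (a (b (a (Phi n)))) (fun s => lam n * a (Phi n) s).
  move=> s Ds; rewrite (Tresp la (Tspan lb hv) (Heig n) s Ds).
  exact: (Tscale la (lam n) (span_Phi n) s Ds).
have e2 : eqOn D (b (a (a (Phi n)))) (fun s => \sum_(i < N) c i * lam i * Phi i s).
  by move=> s Ds; rewrite (TTresp hv hvw s Ds); exact: LT.
case: (pselect (exists m, lam n - La = vs * lam m)) => [|hne]; first by right.
left.
set e := fun i => vs * lam i - (lam n - La).
have ne : forall i, e i != 0.
  move=> i; apply/eqP => h; apply: hne; exists i; apply/eqP.
  by rewrite eq_sym -subr_eq0 -/(e i) h.
have Z : forall k s, D s -> \sum_(i < N) (c i * Phi i s) * e i ^+ k.+1 = 0.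
  elim=> [|k IH] s Ds.
    have := Hcom (a (Phi n)) hv s Ds; rewrite /= e1 // e2 // hvw // => h.
    have -> : \sum_(i < N) (c i * Phi i s) * e i ^+ 1 =
      vs * \sum_(i < N) c i * lam i * Phi i s - (lam n - La) * \sum_(i < N) c i * Phi i s.
      rewrite !mulr_sumr -sumrB; apply: eq_bigr => i _; rewrite /e expr1; ring.
    by apply: eq_trans _ (_ : 0 = 0) ; lra.
  have hG : eqOn D (fun s => \sum_(i < N) (c i * e i ^+ k.+1) * Phi i s) (fun _ => 0).
    move=> t Dt; apply: eq_trans (IH t Dt); apply: eq_bigr => i _; ring.
  have h1 := TTzero (span_sum N (fun i => c i * e i ^+ k.+1)) hG s Ds.
  have h1' := eq_trans (esym (LT N (fun i => c i * e i ^+ k.+1) s Ds)) h1; simpl in h1'.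
  have h2 := hG s Ds.
  have -> : \sum_(i < N) (c i * Phi i s) * e i ^+ k.+2 =
      vs * \sum_(i < N) (c i * e i ^+ k.+1) * lam i * Phi i s -
      (lam n - La) * \sum_(i < N) (c i * e i ^+ k.+1) * Phi i s.
    rewrite !mulr_sumr -sumrB; apply: eq_bigr => i _; rewrite /e !exprS; ring.
  by rewrite h1' h2; ring.
have w0 : forall s, D s -> \sum_(i < N) c i * Phi i s = 0.
  by move=> s Ds; apply: (@indep R N (fun i => c i * Phi i s) e ne) => k; exact: Z.
have v0 : eqOn D (a (Phi n)) (fun _ => 0).
  by move=> s Ds; rewrite hvw // w0.
have [s [Ds hs]] := Hnz n.
have := Heig n s Ds; rewrite (Tzero lb hv v0 s Ds) => /esym/eqP.
by rewrite mulf_eq0 (negbTE hs) orbF => /eqP.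
Qed.
End Ops.

Theorem theorem3 (R : realType) (q c1 c2 c3 mu s2 s1 s0 t1 t0 : R)
    (D : set R) (A rho : R -> R) (d : nat -> R) (P : nat -> R -> R)
    (a b : (R -> R) -> (R -> R)) (vsig Lam : R) :
  0 < q -> q != 1 ->
  (c1 != 0) || (c2 != 0) ->
  (c1 != 0 -> c2 != 0 -> q `^ mu = c1 / c2) ->
  (* P_n is a polynomial of degree n in x(s) ... *)
  (forall n : nat, exists p : {poly R},
      size p = n.+1 /\ forall s, P n s = p.[xl q c1 c2 c3 s]) ->
  (* ... solving the difference equation with lambda = lambda_n *)
  (forall (n : nat) (s : R),
      Delta (xl q c1 c2 c3) s != 0 -> Nabla (xl q c1 c2 c3) s != 0 ->
      Delta (xl q c1 c2 c3) (s - 2^-1) != 0 ->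
      DEop q c1 c2 c3 s2 s1 s0 t1 t0 (P n) (lambda q s2 t1 n) s = 0) ->
  (* rho solves the Pearson equation *)
  (forall s, Delta (xl q c1 c2 c3) (s - 2^-1) != 0 ->
      Delta (fun t => sigmaL q c1 c2 c3 s2 s1 s0 t1 t0 t * rho t) s
        / Delta (xl q c1 c2 c3) (s - 2^-1)
      = tauL q c1 c2 c3 t1 t0 s * rho s) ->
  (* d_n is a norm, A continuous and non-vanishing on the domain D *)
  (forall n, 0 < d n) ->
  continuous A -> (forall s, D s -> A s != 0) ->
  (* frak H Phi_n = lambda_n Phi_n, Phi_n nonzero *)
  (forall n, eqOn D (Hfrak q c1 c2 c3 mu s2 s1 s0 t1 t0 A (PhiF d A rho P n))
                    (fun s => lambda q s2 t1 n * PhiF d A rho P n s)) ->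
  (forall n, exists s, D s /\ PhiF d A rho P n s != 0) ->
  (* a, b operators with frak H = b a and a b - vsig b a = Lam I *)
  linOnSpan D (PhiF d A rho P) a -> linOnSpan D (PhiF d A rho P) b ->
  (forall f, inSpan D (PhiF d A rho P) f ->
      eqOn D (Hfrak q c1 c2 c3 mu s2 s1 s0 t1 t0 A f) (b (a f))) ->
  (forall f, inSpan D (PhiF d A rho P) f ->
      eqOn D (fun s => a (b f) s - vsig * b (a f) s) (fun s => Lam * f s)) ->
  Lam != 0 ->
  (forall n : nat, lambda q s2 t1 n = C1 q s2 t1 * q ^+ n + C3 q s2 t1) \/
  (forall n : nat, lambda q s2 t1 n = C2 q s2 t1 * q ^- n + C3 q s2 t1).
Proof.
move=> hq0 hq1 hc hmu hP hDE hrho hd hA hAnz Heig Hnz la lb Hba Hcom HLam.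
set Phi := PhiF d A rho P.
set lam := lambda q s2 t1.
have Heig' : forall n, eqOn D (b (a (Phi n))) (fun s => lam n * Phi n s).
  move=> n s Ds; rewrite -(Hba _ (span_Phi R D Phi n) s Ds); exact: Heig n s Ds.
have HP := @Pprop R D Phi a b lam vsig Lam la lb Heig' Hcom Hnz.
case: (eqVneq (C2 q s2 t1) 0) => [e2|n2].
  by left => n; rewrite /lam /lambda e2; ring.
case: (eqVneq (C1 q s2 t1) 0) => [e1|n1].
  by right => n; rewrite /lam /lambda e1; ring.
exfalso.
move: hq1; rewrite neq_lt => /orP[hlt|hgt].
  have hQ : 1 < q^-1 by rewrite invf_gt1.
  apply: (@keyL R q^-1 (C2 q s2 t1) (C1 q s2 t1) (C3 q s2 t1) vsig Lam hQ n2 n1 HLam) => n.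
  have fE : forall k, @fk R q^-1 (C2 q s2 t1) (C1 q s2 t1) (C3 q s2 t1) k = lam k.
    by move=> k; rewrite /fk /lam /lambda exprVn invrK; ring.
  by rewrite !fE; case: (HP n) => [h|[m hm]]; [left | right; exists m; rewrite fE].
by apply: (@keyL R q (C1 q s2 t1) (C2 q s2 t1) (C3 q s2 t1) vsig Lam hgt n1 n2 HLam) => n; exact: HP.
Qed.
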